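(* Let $H$ be a cubic graph of order $m$ and let $G=T(H)$. Then $c_2(G)-\left\lceil\frac{|V(G)|+2}{4}\right\rceil\ge\left\lfloor\frac{m-2}{4}\right\rfloor$. Moreover, $G$ has the same number of bridges and the same chromatic index as $H$.
   Context: For a cubic graph $H$, the triangle-replaced graph $T(H)$ is obtained by replacing each vertex $v$ of $H$ by a triangle $T(v)$ and, for each edge $uv$ of $H$, adding an edge joining a vertex of $T(u)$ to a vertex of $T(v)$, so that each triangle vertex is incident with exactly one added edge. For a graph $G=(V,E)$ and $S_0\subseteq V$, the irreversible $2$-threshold conversion process sets, for $t=1,2,\dots$, $S_t=S_{t-1}\cup\{v: v \text{ has at least } 2 \text{ neighbours in } S_{t-1}\}$; $S_0$ is a $2$-conversion set if $S_t=V$ for some $t$, and $c_2(G)$ is the minimum size of a $2$-conversion set. *)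

(* Defs.v *)
From HB Require Import structures.
From mathcomp Require Import all_boot all_order all_algebra.
From mathcomp Require Import boolp.
Set Implicit Arguments. Unset Strict Implicit. Unset Printing Implicit Defensive.

Definition simple_graph (T : finType) (r : rel T) : Prop :=
  symmetric r /\ irreflexive r.

Definition cubic (V : finType) (e : rel V) : Prop :=
  simple_graph e /\ forall v : V, #|[set u | e v u]| = 3.

(* Triangle-replaced graph T(H): the vertices of the triangle T(v) are the
   darts (v,u) with u adjacent to v; (v,u) ~ (v,u') for u <> u' (triangle
   edges), and (v,u) ~ (u,v) (the edge added for the edge uv of H). *)
Definition tri_vert (V : finType) (e : rel V) := {x : V * V | e x.1 x.2}.

Definition tri_rel (V : finType) (e : rel V) : rel (tri_vert e) :=
  fun x y =>
    let a := (val x).1 in let b := (val x).2 in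
    let c := (val y).1 in let d := (val y).2 in
    ((a == c) && (b != d)) || ((a == d) && (b == c)).
Arguments tri_rel {V} e.

Definition conv_step (T : finType) (r : rel T) (S : {set T}) : {set T} :=
  S :|: [set v | 2 <= #|[set u in S | r v u]|].

Definition conversion_set (T : finType) (r : rel T) (S0 : {set T}) : Prop :=
  exists t : nat, iter t (conv_step r) S0 = [set: T].

Lemma c2_exists (T : finType) (r : rel T) :
  exists k, `[< exists S : {set T}, #|S| = k /\ conversion_set r S >].
Proof.
exists #|[set: T]|; apply/asboolP; exists [set: T]; split => //; by exists 0.
Qed.

Definition c2 (T : finType) (r : rel T) : nat := ex_minn (c2_exists r).

Definition edge_set (T : finType) (r : rel T) : {set {set T}} :=
  [set E : {set T} | [exists x, exists y, (E == [set x; y]) && r x y]].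

Definition is_bridge (T : finType) (r : rel T) (E : {set T}) : bool :=
  [exists x, exists y, [&& E == [set x; y], r x y &
     ~~ connect (fun a b => r a b && ([set a; b] != E)) x y]].

Definition num_bridges (T : finType) (r : rel T) : nat :=
  #|[set E in edge_set r | is_bridge r E]|.

Definition proper_edge_colouring (T : finType) (r : rel T) (k : nat)
    (c : {set T} -> 'I_k) : Prop :=
  forall E F, E \in edge_set r -> F \in edge_set r -> E != F ->
    E :&: F != set0 -> c E != c F.

Lemma chi'_exists (T : finType) (r : rel T) :
  exists k, `[< exists c : {set T} -> 'I_k, proper_edge_colouring r c >].
Proof.
exists #|{set T}|; apply/asboolP; exists (@enum_rank _).
move=> E F _ _ nEF _; apply: contra nEF => /eqP h.
by apply/eqP; apply: enum_rank_inj.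
Qed.

Definition chromatic_index (T : finType) (r : rel T) : nat :=
  ex_minn (chi'_exists r).

(* Main.v *)
Set Warnings "-notation-overridden,-ambiguous-paths".
Require Import Defs.
From mathcomp Require Import all_boot all_order all_algebra.
From mathcomp Require Import zify.
From mathcomp Require Import boolp.
Set Implicit Arguments. Unset Strict Implicit. Unset Printing Implicit Defensive.

Section Basic.
Variables (V : finType) (e : rel V).
Hypothesis hc : cubic e.

Lemma e_sym : symmetric e. Proof. by case: hc => [[]]. Qed.
Lemma e_irr : irreflexive e. Proof. by case: hc => [[]]. Qed.
Lemma cardN v : #|[set u | e v u]| = 3. Proof. by case: hc. Qed.

Lemma third v a b : exists w, [/\ e v w, w != a & w != b].
Proof.
have h : 0 < #|[set u | e v u] :\ a :\ b|.
  have := cardN v; have := cardsD1 a ([set u | e v u]);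
  have := cardsD1 b ([set u | e v u] :\ a); lia.
case/card_gt0P: h => w; rewrite !inE => /and3P [wb wa evw].
by exists w.
Qed.

Lemma fourth v a b c d : e v a -> e v b -> e v c -> e v d ->
  a != b -> a != c -> b != c -> [|| d == a, d == b | d == c].
Proof.
move=> ha hb hcc hd ab ac bc; apply/negPn/negP => /norP [da /norP [db dc]].
have : #|d |: (c |: [set a; b])| <= #|[set u | e v u]|.
  apply: subset_leq_card; apply/subsetP => x; rewrite !inE.
  by case/or4P => /eqP ->.
rewrite cardN !cardsU1 !inE cards1.
by rewrite (negbTE da) (negbTE db) (negbTE dc) eq_sym (negbTE ac) eq_sym (negbTE bc) ab.
Qed.

Lemma tri_sym : symmetric (tri_rel e).
Proof.
move=> [[a b] ?] [[c d] ?]; rewrite /tri_rel /=; congr (_ || _).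
  by rewrite (eq_sym a) (eq_sym b).
by rewrite andbC (eq_sym a) (eq_sym b).
Qed.

Lemma tri_irr : irreflexive (tri_rel e).
Proof.
move=> [[a b] h]; rewrite /tri_rel /= !eqxx /=; apply/negP => /andP [/eqP ab _].
by rewrite ab e_irr in h.
Qed.

Lemma conv_block (S : {set tri_vert e}) v :
  (forall x, x \in S -> (val x).1 != v) ->
  forall t x, (val x).1 = v -> x \notin iter t (conv_step (tri_rel e)) S.
Proof.
move=> hS; elim=> [|t IH] x hx /=; first by apply/negP => /hS; rewrite hx eqxx.
rewrite /conv_step inE negb_or IH //= inE -ltnNge ltnS.
apply/card_le1_eqP => y z; rewrite !inE => /andP [yS xy] /andP [zS xz].
have key : forall w, w \notin iter t (conv_step (tri_rel e)) S -> False -> True by [].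
have hy : v != (val y).1 by apply/negP => /eqP h; move: (IH y (esym h)); rewrite yS.
have hz : v != (val z).1 by apply/negP => /eqP h; move: (IH z (esym h)); rewrite zS.
move: xy xz; rewrite /tri_rel hx (negbTE hy) (negbTE hz) /= => /andP [/eqP y1 /eqP y2] /andP [/eqP z1 /eqP z2].
apply: val_inj.
by rewrite [val y]surjective_pairing [val z]surjective_pairing -y1 -y2 -z1 -z2.
Qed.

Lemma c2_ge : #|V| <= c2 (tri_rel e).
Proof.
rewrite /c2; case: ex_minnP => k /asboolP [S [<- [t ht]]] _.
have cover : forall v, [exists x in S, (val x).1 == v].
  move=> v; apply: contraT; rewrite negb_exists_in => /forall_inP hS.
  have [w [evw _ _]] := third v v v.
  have := @conv_block S v (fun x xS => hS x xS) t (exist _ (v, w) evw) erefl.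
  by rewrite ht inE.
rewrite -cardsT.
have -> : [set: V] = [set (val x).1 | x in S].
  apply/setP => v; rewrite inE; apply/esym/imsetP.
  by case/exists_inP: (cover v) => x xS /eqP <-; exists x.
exact: leq_imset_card.
Qed.

Lemma card_tri : #|{: tri_vert e}| = 3 * #|V|.
Proof.
rewrite card_sig -sum1_card.
rewrite -(pair_big_dep xpredT (fun v u => e v u) (fun _ _ => 1)) /=.
rewrite (eq_bigr (fun _ => 3)) ?sum_nat_const ?card_ord ?cardT ?size_enum_ord //.
  by rewrite mulnC.
by move=> v _; rewrite sum1_card -(cardN v) cardsE.
Qed.

End Basic.

Lemma set2_eq (T : finType) (a b c d : T) :
  [set a; b] = [set c; d] -> (a = c /\ b = d) \/ (a = d /\ b = c).
Proof.
move=> h.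
have ha : a \in [set c; d] by rewrite -h !inE eqxx.
have hb : b \in [set c; d] by rewrite -h !inE eqxx orbT.
have hc : c \in [set a; b] by rewrite h !inE eqxx.
have hd : d \in [set a; b] by rewrite h !inE eqxx orbT.
move: ha hb hc hd; rewrite !inE.
by do 4 (case/orP => /eqP ?); subst; auto.
Qed.

Lemma set2_in (T : finType) (a b p q : T) :
  a \in [set p; q] -> b \in [set p; q] -> a != b -> [set a; b] = [set p; q].
Proof.
rewrite !inE => /orP [] /eqP -> /orP [] /eqP ->; rewrite ?eqxx //= => _.
by rewrite setUC.
Qed.

Lemma bridge_edge (T : finType) (r : rel T) E : is_bridge r E -> E \in edge_set r.
Proof.
case/existsP => x /existsP [y /and3P [h1 h2 _]].
by rewrite inE; apply/existsP; exists x; apply/existsP; exists y; rewrite h1 h2.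
Qed.

Lemma connect_map (T U : finType) (R : rel T) (S : rel U) (h : T -> U) :
  (forall a b, R a b -> connect S (h a) (h b)) ->
  forall x y, connect R x y -> connect S (h x) (h y).
Proof.
move=> hs x y /connectP [s pth ->]; elim: s x pth => [|z s IH] x /=.
  by rewrite connect0.
by case/andP => xz pth; apply: connect_trans (hs _ _ xz) (IH _ pth).
Qed.

Section Bridges.
Variables (V : finType) (e : rel V).
Hypothesis hc : cubic e.

Definition pend (E : {set V}) : {set tri_vert e} :=
  [set x | [set (val x).1; (val x).2] == E].

Definition dart a b (h : e a b) : {x : V * V | e x.1 x.2} := exist _ (a, b) h.
Arguments dart {a b}.

Lemma pend_dart a b (h : e a b) x :
  (x \in pend [set a; b]) = (val x == (a, b)) || (val x == (b, a)).
Proof.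
rewrite inE; case: x => [[c d] /= hcd]; apply/eqP/idP.
  by case/set2_eq => [[-> ->]|[-> ->]]; rewrite eqxx ?orbT.
by case/orP => /eqP [-> ->] //; rewrite setUC.
Qed.

Arguments pend_dart {a b}.

Notation GE E := (fun a b => tri_rel e a b && ([set a; b] != E)).
Notation HE E := (fun a b => e a b && ([set a; b] != E)).

Lemma bridge_up E : is_bridge e E -> is_bridge (tri_rel e) (pend E).
Proof.
case/existsP => u /existsP [v /and3P [/eqP hE huv hnc]].
have hvu : e v u by rewrite e_sym.
pose p := dart huv; pose q := dart hvu.
have hpq : pend E = [set p; q].
  apply/setP => x; rewrite hE (pend_dart huv) !inE.
  by congr (_ || _); apply/eqP/eqP => [h|-> //]; apply: val_inj.
apply/existsP; exists p; apply/existsP; exists q.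
rewrite hpq eqxx /= {1}/tri_rel /= !eqxx orbT /=.
apply: contra hnc => hc'.
have := @connect_map _ _ (GE [set p; q]) (HE E) (fun x => (val x).1) _ p q hc'.
apply.
move=> a b /andP [hab hne].
move: hab; rewrite /tri_rel => /orP [/andP [/eqP -> _]|/andP [/eqP h1 /eqP h2]].
  exact: connect0.
apply: connect1; rewrite /= -h2 (valP a) /=.
apply: contra hne => /eqP hE'.
have ha : a \in [set p; q] by rewrite -hpq inE hE'.
have hb : b \in [set p; q].
  by rewrite -hpq inE -hE' h1 h2 setUC.
rewrite (set2_in ha hb) //.
by apply/negP => /eqP ab; move: (tri_irr hc a); rewrite {2}ab /tri_rel h1 h2 !eqxx orbT.
Qed.

Lemma bridge_down EG : is_bridge (tri_rel e) EG -> exists2 E, is_bridge e E & EG = pend E.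
Proof.
case/existsP => a /existsP [b /and3P [/eqP hEG hab hnc]].
have ea := valP a.
move: hab; rewrite {1}/tri_rel => /orP [/andP [/eqP h1 h2]|/andP [/eqP h1 /eqP h2]].
  have [w [ew wa wb]] := third hc (val a).1 (val a).2 (val b).2.
  pose c := dart ew.
  exfalso; apply: (negP hnc).
  have hac : GE EG a c.
    rewrite /= /tri_rel /= eqxx eq_sym wa /= hEG.
    apply/negP => /eqP /set2_eq [[_ cb]|[ab _]].
      by move: wb; rewrite -cb /= eqxx.
    by move: h2; rewrite ab eqxx.
  have hcb : GE EG c b.
    rewrite /= /tri_rel /= h1 eqxx wb /= hEG.
    apply/negP => /eqP /set2_eq [[ca _]|[cb _]].
      by move: wa; rewrite -ca eqxx.
    by move: wb; rewrite -cb eqxx.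
  by apply: (@connect_trans _ _ c a b); apply: connect1.
pose E := [set (val a).1; (val a).2].
have vb : val b = ((val a).2, (val a).1) by rewrite [val b]surjective_pairing h1 h2.
exists E; last first.
  apply/setP => x; rewrite hEG /E (pend_dart ea) !inE; apply/esym.
  congr (_ || _); apply/eqP/eqP => [h|->]; try (apply: val_inj); by rewrite ?h ?vb.
apply/existsP; exists (val a).1; apply/existsP; exists (val a).2.
rewrite eqxx ea /=.
apply: contra hnc => /connectP [s pth hlast].
have sub : forall s t, [set (val s).1; (val s).2] != E -> tri_rel e s t -> GE EG s t.
  move=> s0 t st hs; rewrite hs /= hEG; apply: contra st => /eqP h.
  have : s0 \in [set a; b] by rewrite -h !inE eqxx.
  by rewrite !inE => /orP [] /eqP ->; rewrite // vb /= /E setUC.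
have base : forall x, (val x).1 = (val a).1 -> connect (GE EG) a x.
  move=> x hx; case: (eqVneq x a) => [->|xa]; first exact: connect0.
  apply: connect1; rewrite /= /tri_rel hx eqxx /=.
  have -> : (val a).2 != (val x).2.
    apply: contra xa => /eqP h; apply/eqP/val_inj.
    by rewrite [val x]surjective_pairing [val a]surjective_pairing hx h.
  rewrite /= hEG; apply/negP => /eqP /set2_eq [[_ xb]|[_ xa']].
    by move: hx; rewrite xb vb /= => h; move: ea; rewrite h e_irr.
  by move: xa; rewrite xa' eqxx.
have step : forall s w, path (HE E) w s ->
    (forall x, (val x).1 = w -> connect (GE EG) a x) ->
    forall x, (val x).1 = last w s -> connect (GE EG) a x.
  elim=> [|w' s0 IH] w /=; first by move=> _ h x hx; apply: h.
  case/andP => /andP [eww' hne] pth' hw.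
  apply: IH => // x hx.
  have ew'w : e w' w by rewrite e_sym.
  pose s1 := dart eww'; pose t0 := dart ew'w.
  have h1' : connect (GE EG) a s1 by apply: hw.
  have h2' : GE EG s1 t0 by apply: sub => //; rewrite /tri_rel /= !eqxx orbT.
  have h3 : connect (GE EG) a t0 := @connect_trans _ _ s1 a t0 h1' (@connect1 _ (GE EG) _ _ h2').
  apply: (@connect_trans _ _ t0 a x h3).
  case: (eqVneq x t0) => [->|xt]; first exact: connect0.
  apply: connect1; apply: sub; first by rewrite /= setUC.
  rewrite /tri_rel /= hx eqxx /=.
  have -> // : w != (val x).2.
  apply: contra xt => /eqP h; apply/eqP/val_inj.
  by rewrite [val x]surjective_pairing hx -h.
apply: (step s (val a).1 pth base b).
by rewrite -hlast vb.
Qed.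

Lemma num_bridges_eq : num_bridges (tri_rel e) = num_bridges e.
Proof.
rewrite /num_bridges.
have -> : [set EG in edge_set (tri_rel e) | is_bridge (tri_rel e) EG] =
          pend @: [set E in edge_set e | is_bridge e E].
  apply/setP => EG; rewrite inE; apply/andP/imsetP.
    by case=> _ /bridge_down [E hb ->]; exists E => //; rewrite inE hb bridge_edge.
  case=> E; rewrite inE => /andP [_ hb] ->.
  by have hb' := bridge_up hb; rewrite hb' bridge_edge.
apply: card_in_imset => E E'; rewrite !inE => /andP [hE _] /andP [hE' _] heq.
move: heq; case/existsP: hE => u /existsP [v /andP [/eqP -> huv]] heq.
have : dart huv \in pend E' by rewrite -heq inE.
by rewrite inE /= => /eqP.
Qed.

End Bridges.

Lemma ex2 (T : finType) (P : pred T) s t :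
  [exists x in [set s; t], P x] = P s || P t.
Proof.
apply/exists_inP/orP => [[x]|[h|h]].
- by rewrite !inE => /orP [] /eqP -> h; auto.
- by exists s; rewrite ?inE ?eqxx.
- by exists t; rewrite ?inE ?eqxx ?orbT.
Qed.

Lemma all2 (T : finType) (P : pred T) s t :
  [forall x in [set s; t], P x] = P s && P t.
Proof.
apply/forall_inP/andP => [h|[h1 h2] x].
- by split; apply: h; rewrite !inE eqxx ?orbT.
- by rewrite !inE => /orP [] /eqP ->.
Qed.

Lemma edge_at (T : finType) (r : rel T) E s :
  symmetric r -> E \in edge_set r -> s \in E -> exists t, E = [set s; t] /\ r s t.
Proof.
move=> hs; rewrite inE => /existsP [a /existsP [b /andP [/eqP -> hab]]].
rewrite !inE => /orP [] /eqP ->; first by exists b.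
by exists a; rewrite setUC hs.
Qed.

Lemma edge2 (T : finType) (r : rel T) a b : r a b -> [set a; b] \in edge_set r.
Proof. by move=> h; rewrite inE; apply/existsP; exists a; apply/existsP; exists b; rewrite eqxx h. Qed.

Lemma meet (T : finType) (A B : {set T}) z : z \in A -> z \in B -> A :&: B != set0.
Proof. by move=> hA hB; apply/set0Pn; exists z; rewrite inE hA hB. Qed.

Lemma sneq (T : finType) (A B : {set T}) z : z \in A -> z \notin B -> A != B.
Proof. by move=> hA hB; apply: contraNneq hB => <-. Qed.

Lemma ord4 k (a b c d : 'I_k) : k <= 3 -> a != b -> a != c -> a != d -> b != c -> b != d -> c != d -> False.
Proof.
move=> hk; rewrite -!val_eqE /=.
have := ltn_ord a; have := ltn_ord b; have := ltn_ord c; have := ltn_ord d.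
move: (nat_of_ord a) (nat_of_ord b) (nat_of_ord c) (nat_of_ord d) => x y z w.
move=> *; lia.
Qed.

Section Chrom.
Variables (V : finType) (e : rel V).
Hypothesis hc : cubic e.

Local Notation TV := {x : V * V | e x.1 x.2}.

Definition hE (EG : {set TV}) : {set V} :=
  if [exists x in EG, exists y in EG, (val x).1 != (val y).1]
  then [set z | [exists x in EG, (val x).1 == z]]
  else [set z | [exists x in EG, ((val x).1 == z) ||
           (e (val x).1 z && [forall y in EG, (val y).2 != z])]].

Lemma hE_pend (s t : TV) : val t = ((val s).2, (val s).1) ->
  hE [set s; t] = [set (val s).1; (val s).2].
Proof.
move=> ht.
have ne : (val s).1 != (val s).2 by apply/negP => /eqP h; move: (valP s); rewrite h e_irr.
rewrite /hE ex2 !ex2 ht /=; case: ifP => [_|]; last by rewrite ne orbT.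
apply/setP => z; rewrite !inE ex2 ht /=.
by rewrite (eq_sym _ z) (eq_sym _ z) orbC.
Qed.

Lemma hE_tri (s t : TV) w : (val t).1 = (val s).1 -> (val s).2 != (val t).2 ->
  e (val s).1 w -> w != (val s).2 -> w != (val t).2 ->
  hE [set s; t] = [set (val s).1; w].
Proof.
case: s => [[a b] hab]; case: t => [[c d] hcd] /= h1; subst c.
move=> h2 ew ws wt; rewrite /hE ex2 !ex2 /=; case: ifP => [|_]; first by rewrite (eqxx a).
apply/setP => z; rewrite !inE ex2 /= orbb !all2 /=.
case: (eqVneq z a) => [->|zs] //=.
apply/idP/idP => [/and3P [ez zs2 zt2]|/eqP ->].
  have bw : b != w by rewrite eq_sym.
  have dw : d != w by rewrite eq_sym.
  have := fourth hc hab hcd ew ez h2 bw dw.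
  case/or3P => // /eqP zz; subst z.
  - by rewrite eqxx in zs2.
  - by rewrite eqxx in zt2.
by rewrite ew eq_sym ws eq_sym wt.
Qed.

Lemma col_up k (c : {set V} -> 'I_k) :
  proper_edge_colouring e c -> proper_edge_colouring (tri_rel e) (fun EG => c (hE EG)).
Proof.
move=> hp EE FF hEE hFF neq hm.
case/set0Pn: hm => s; rewrite inE => /andP [sE sF].
have [t [eE st]] := edge_at (@tri_sym _ e) hEE sE.
have [t' [eF st']] := edge_at (@tri_sym _ e) hFF sF.
rewrite eE eF; rewrite eE eF in neq.
clear sE sF eE eF hEE hFF.
move: st st' neq; case: s => [[a b] hab]; case: t => [[c0 d] hcd]; case: t' => [[c' d'] hcd'].
rewrite /tri_rel /= => st st' neq.
have tt' : (c0, d) != (c', d').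
  apply: contraNneq neq => -[h1 h2]; subst c' d'.
  by rewrite (bool_irrelevance hcd' hcd).
have ab : a != b by apply/negP => /eqP h; move: (hab); rewrite /= h e_irr.
case/orP: st => /andP [/eqP h1 h2]; case/orP: st' => /andP [/eqP h1' h2'].
-
  subst c0 c'.
  have dd : d != d' by apply: contraNneq tt' => ->.
  have db : d != b by rewrite eq_sym.
  have db' : d' != b by rewrite eq_sym.
  have dd' : d' != d by rewrite eq_sym.
  rewrite (@hE_tri (exist _ (a, b) hab) (exist _ (a, d) hcd) d' erefl h2 hcd' db' dd').
  rewrite (@hE_tri (exist _ (a, b) hab) (exist _ (a, d') hcd') d erefl h2' hcd db dd) /=.
  apply: hp; rewrite ?edge2 //.
  + apply: (@sneq _ _ _ d'); rewrite !inE ?eqxx ?orbT //.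
    by rewrite negb_or dd' andbT; apply/negP => /eqP h; move: (hcd'); rewrite /= h e_irr.
  + by apply: (@meet _ _ _ a); rewrite !inE eqxx.
-
  subst c0 d'; move/eqP: h2' => h2'; subst c'.
  have [w [ew wb wd]] := third hc a b d.
  rewrite (@hE_tri (exist _ (a, b) hab) (exist _ (a, d) hcd) w) //=.
  rewrite (@hE_pend (exist _ (a, b) hab) (exist _ (b, a) hcd')) //=.
  apply: hp; rewrite ?edge2 //.
  + rewrite eq_sym; apply: (@sneq _ _ _ b); rewrite !inE ?eqxx ?orbT //.
    by rewrite negb_or eq_sym ab eq_sym wb.
  + by apply: (@meet _ _ _ a); rewrite !inE eqxx.
-
  subst d c'; move/eqP: h2 => h2; subst c0.
  have [w [ew wb wd]] := third hc a b d'.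
  rewrite (@hE_pend (exist _ (a, b) hab) (exist _ (b, a) hcd)) //=.
  rewrite (@hE_tri (exist _ (a, b) hab) (exist _ (a, d') hcd') w) //=.
  apply: hp; rewrite ?edge2 //.
  + apply: (@sneq _ _ _ b); rewrite !inE ?eqxx ?orbT //.
    by rewrite negb_or eq_sym ab eq_sym wb.
  + by apply: (@meet _ _ _ a); rewrite !inE eqxx.
-
  move/eqP: h2 => h2; move/eqP: h2' => h2'; subst.
  by rewrite eqxx in tt'.
Qed.

Lemma pend_eq a b (h : e a b) (h' : e b a) :
  pend e [set a; b] = [set (dart h : tri_vert e); dart h'].
Proof.
apply/setP => z; rewrite (pend_dart h) !inE -!val_eqE /=.
by [].
Qed.

Lemma col_down k (c : {set tri_vert e} -> 'I_k) : k <= 3 ->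
  proper_edge_colouring (tri_rel e) c -> proper_edge_colouring e (fun E => c (pend e E)).
Proof.
move=> hk hp E F hE hF neq hm.
case/set0Pn: hm => v; rewrite inE => /andP [vE vF].
have [u [eE evu]] := edge_at (e_sym hc) hE vE.
have [u' [eF evu']] := edge_at (e_sym hc) hF vF.
subst E F.
have uu' : (u == u') = false.
  by apply/negbTE; apply: contraNneq neq => ->.
have [w [evw wu wu']] := third hc v u u'.
have vu : (v == u) = false by apply/negbTE/negP => /eqP h; move: evu; rewrite h e_irr.
have vu' : (v == u') = false by apply/negbTE/negP => /eqP h; move: evu'; rewrite h e_irr.
have vw : (v == w) = false by apply/negbTE/negP => /eqP h; move: evw; rewrite h e_irr.
have uv : (u == v) = false by rewrite eq_sym.
have u'v : (u' == v) = false by rewrite eq_sym.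
have wv : (w == v) = false by rewrite eq_sym.
have u'u : (u' == u) = false by rewrite eq_sym.
have wu2 : (w == u) = false by apply/negbTE.
have wu2' : (w == u') = false by apply/negbTE.
have uw : (u == w) = false by rewrite eq_sym.
have u'w : (u' == w) = false by rewrite eq_sym.
have euv : e u v by rewrite e_sym.
have eu'v : e u' v by rewrite e_sym.
pose x : tri_vert e := dart evu; pose x' : tri_vert e := dart evu';
pose x'' : tri_vert e := dart evw; pose y : tri_vert e := dart euv; pose y' : tri_vert e := dart eu'v.
rewrite (pend_eq evu euv) (pend_eq evu' eu'v) -/x -/x' -/y -/y'.
have tr : forall p q : tri_vert e, tri_rel e p q -> [set p; q] \in edge_set (tri_rel e).
  by move=> p q; apply: edge2.
have T1 : [set x; x'] \in edge_set (tri_rel e).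
  by apply: tr; rewrite /tri_rel /= eqxx uu'.
have T2 : [set x; x''] \in edge_set (tri_rel e).
  by apply: tr; rewrite /tri_rel /= eqxx uw.
have T3 : [set x'; x''] \in edge_set (tri_rel e).
  by apply: tr; rewrite /tri_rel /= eqxx u'w.
have PE : [set x; y] \in edge_set (tri_rel e).
  by apply: tr; rewrite /tri_rel /= !eqxx orbT.
have PF : [set x'; y'] \in edge_set (tri_rel e).
  by apply: tr; rewrite /tri_rel /= !eqxx orbT.
apply/negP => /eqP hcol.
apply: (@ord4 k (c [set x; x']) (c [set x; x'']) (c [set x'; x'']) (c [set x; y]) hk).
- apply: hp => //; last by apply: (@meet _ _ _ x); rewrite !inE -?val_eqE /= ?xpair_eqE ?eqxx ?uu' ?u'u ?vu ?uv ?vu' ?u'v ?vw ?wv ?wu2 ?wu2' ?uw ?u'w.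
  by apply: (@sneq _ _ _ x'); rewrite !inE -?val_eqE /= ?xpair_eqE ?eqxx ?uu' ?u'u ?vu ?uv ?vu' ?u'v ?vw ?wv ?wu2 ?wu2' ?uw ?u'w.
- apply: hp => //; last by apply: (@meet _ _ _ x'); rewrite !inE -?val_eqE /= ?xpair_eqE ?eqxx ?uu' ?u'u ?vu ?uv ?vu' ?u'v ?vw ?wv ?wu2 ?wu2' ?uw ?u'w.
  by apply: (@sneq _ _ _ x); rewrite !inE -?val_eqE /= ?xpair_eqE ?eqxx ?uu' ?u'u ?vu ?uv ?vu' ?u'v ?vw ?wv ?wu2 ?wu2' ?uw ?u'w.
- apply: hp => //; last by apply: (@meet _ _ _ x); rewrite !inE -?val_eqE /= ?xpair_eqE ?eqxx ?uu' ?u'u ?vu ?uv ?vu' ?u'v ?vw ?wv ?wu2 ?wu2' ?uw ?u'w.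
  by apply: (@sneq _ _ _ x'); rewrite !inE -?val_eqE /= ?xpair_eqE ?eqxx ?uu' ?u'u ?vu ?uv ?vu' ?u'v ?vw ?wv ?wu2 ?wu2' ?uw ?u'w.
- apply: hp => //; last by apply: (@meet _ _ _ x''); rewrite !inE -?val_eqE /= ?xpair_eqE ?eqxx ?uu' ?u'u ?vu ?uv ?vu' ?u'v ?vw ?wv ?wu2 ?wu2' ?uw ?u'w.
  by apply: (@sneq _ _ _ x); rewrite !inE -?val_eqE /= ?xpair_eqE ?eqxx ?uu' ?u'u ?vu ?uv ?vu' ?u'v ?vw ?wv ?wu2 ?wu2' ?uw ?u'w.
- apply: hp => //; last by apply: (@meet _ _ _ x); rewrite !inE -?val_eqE /= ?xpair_eqE ?eqxx ?uu' ?u'u ?vu ?uv ?vu' ?u'v ?vw ?wv ?wu2 ?wu2' ?uw ?u'w.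
  by apply: (@sneq _ _ _ x''); rewrite !inE -?val_eqE /= ?xpair_eqE ?eqxx ?uu' ?u'u ?vu ?uv ?vu' ?u'v ?vw ?wv ?wu2 ?wu2' ?uw ?u'w.
- rewrite hcol; apply: hp => //; last by apply: (@meet _ _ _ x'); rewrite !inE -?val_eqE /= ?xpair_eqE ?eqxx ?uu' ?u'u ?vu ?uv ?vu' ?u'v ?vw ?wv ?wu2 ?wu2' ?uw ?u'w.
  by apply: (@sneq _ _ _ x''); rewrite !inE -?val_eqE /= ?xpair_eqE ?eqxx ?uu' ?u'u ?vu ?uv ?vu' ?u'v ?vw ?wv ?wu2 ?wu2' ?uw ?u'w.
Qed.

End Chrom.

Section Gen.
Variable T : finType.
Implicit Types (c : {set T} -> 'I_4) (D : {set {set T}}).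

Definition propD c D := forall E F, E \in D -> F \in D -> E != F -> E :&: F != set0 -> c E != c F.

Definition used c D w : {set 'I_4} := [set c F | F in [set F in D | w \in F]].

Lemma usedP c D w d : reflect (exists F, [/\ F \in D, w \in F & c F = d]) (d \in used c D w).
Proof.
apply: (iffP imsetP) => [[F]|[F [h1 h2 h3]]]; first by rewrite inE => /andP [h1 h2] ->; exists F.
by exists F; rewrite ?inE ?h1 ?h2.
Qed.

Definition upd c F0 (g : 'I_4) := fun F => if F == F0 then g else c F.

Lemma set_col c D0 F0 a b g : propD c D0 -> F0 = [set a; b] ->
  g \notin used c D0 a -> g \notin used c D0 b -> propD (upd c F0 g) (F0 |: D0).
Proof.
move=> hp hF ga gb.
have key : forall F, F \in D0 -> F != F0 -> F :&: F0 != set0 -> c F != g.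
  move=> F FD FF0 /set0Pn [z]; rewrite inE hF !inE => /andP [zF /orP [] /eqP zab]; subst z.
  - by apply: contraNneq ga => <-; apply/usedP; exists F.
  - by apply: contraNneq gb => <-; apply/usedP; exists F.
move=> E F; rewrite !inE /upd => /orP [/eqP ->|ED] /orP [/eqP ->|FD] EF hm.
- by rewrite eqxx in EF.
- rewrite eqxx; case: (eqVneq F F0) => [FE|FE]; first by rewrite FE eqxx in EF.
  by rewrite eq_sym; apply: key => //; rewrite setIC.
- case: (eqVneq E F0) => [EE|EE]; first by rewrite EE eqxx in EF.
  by rewrite eqxx; apply: key.
- case: (eqVneq E F0) => [EE|EE]; case: (eqVneq F F0) => [FE|FE].
  + by rewrite EE FE eqxx in EF.
  + by rewrite eq_sym; apply: key => //; rewrite -EE setIC.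
  + by apply: key => //; rewrite -FE.
  + by apply: hp.
Qed.

Lemma used_upd_notin c D F0 g d w : d != g -> d \notin used c (D :\ F0) w ->
  d \notin used (upd c F0 g) D w.
Proof.
move=> dg hn; apply/usedP => -[G [GD wG]]; rewrite /upd.
case: (eqVneq G F0) => [_ hg|GF hg]; first by rewrite hg eqxx in dg.
rewrite -hg in hn.
by apply: (negP hn); apply/usedP; exists G; rewrite !inE GF GD.
Qed.

Lemma used_minus c D F0 w : propD c D -> F0 \in D -> w \in F0 ->
  c F0 \notin used c (D :\ F0) w.
Proof.
move=> hp FD wF; apply/usedP => -[G [GD wG hG]].
move: GD; rewrite !inE => /andP [GF GD].
by move: (hp _ _ GD FD GF (meet wG wF)); rewrite hG eqxx.
Qed.

Lemma used_sub c D F0 w d : d \notin used c D w -> d \notin used c (D :\ F0) w.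
Proof.
move=> hn; apply/usedP => -[G [GD wG hG]].
by apply: (negP hn); apply/usedP; exists G; move: GD; rewrite inE => /andP [_ ->].
Qed.

(* Kempe chains *)
Definition swapc (a b g : 'I_4) := if g == a then b else if g == b then a else g.

Lemma swapcK a b : involutive (swapc a b).
Proof.
move=> g; rewrite /swapc.
case: (eqVneq g a) => [->|ga]; first by rewrite eqxx; case: eqVneq.
case: (eqVneq g b) => [->|gb]; first by rewrite eqxx.
by rewrite (negbTE ga) (negbTE gb).
Qed.

Lemma swapc_in a b g (U : {set 'I_4}) : (g \in [set swapc a b x | x in U]) = (swapc a b g \in U).
Proof.
apply/imsetP/idP => [[x xU ->]|h]; first by rewrite swapcK.
by exists (swapc a b g); rewrite ?swapcK.
Qed.

Lemma swapc_out a b g : g != a -> g != b -> swapc a b g = g.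
Proof. by move=> ga gb; rewrite /swapc (negbTE ga) (negbTE gb). Qed.

Lemma swapc_a a b : swapc a b a = b.
Proof. by rewrite /swapc eqxx. Qed.

Definition Kr c D (a b : 'I_4) : rel T := fun x y => ([set x; y] \in D) && (c [set x; y] \in [set a; b]).

Definition comp c D a b v := [set w | connect (Kr c D a b) v w].

Definition kempe c D a b v := fun F =>
  if (F \in D) && (c F \in [set a; b]) && [exists w in comp c D a b v, w \in F]
  then swapc a b (c F) else c F.

Lemma kempe_at c D a b v F w :
  (forall F, F \in D -> exists x y, F = [set x; y]) ->
  F \in D -> w \in F ->
  kempe c D a b v F = if w \in comp c D a b v then swapc a b (c F) else c F.
Proof.
move=> hD FD wF; rewrite /kempe FD /=.
have [x [y hF]] := hD F FD.
have other : exists z, F = [set w; z].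
  move: wF; rewrite hF !inE => /orP [] /eqP ->; first by exists y.
  by exists x; rewrite setUC.
case: other => z hz.
case: (boolP (c F \in [set a; b])) => hab /=.
- case: (boolP (w \in comp c D a b v)) => wc.
    by rewrite (_ : [exists _ in _, _] = true) //; apply/exists_inP; exists w.
  case: ifP => // /exists_inP [u uc uF].
  exfalso; apply: (negP wc).
  move: uF; rewrite hz !inE => /orP [/eqP uw|/eqP uz].
    by move: uc; rewrite inE uw.
  move: uc; rewrite inE uz => uc; apply: (connect_trans uc); apply: connect1.
  by rewrite /Kr (setUC [set z]) -hz FD hab.
- case: ifP => // _.
  move: hab; rewrite !inE negb_or => /andP [h1 h2].
  by rewrite swapc_out.
Qed.

Lemma kempe_proper c D a b v :
  (forall F, F \in D -> exists x y, F = [set x; y]) ->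
  propD c D -> propD (kempe c D a b v) D.
Proof.
move=> hD hp E F ED FD EF hm.
case/set0Pn: (hm) => z; rewrite inE => /andP [zE zF].
rewrite (@kempe_at c D a b v E z hD ED zE) (@kempe_at c D a b v F z hD FD zF).
case: ifP => _; last exact: hp.
by rewrite (inj_eq (can_inj (swapcK a b))); apply: hp.
Qed.

Lemma kempe_notin_in c D a b v w g :
  (forall F, F \in D -> exists x y, F = [set x; y]) ->
  w \in comp c D a b v -> swapc a b g \notin used c D w -> g \notin used (kempe c D a b v) D w.
Proof.
move=> hD wc hn; apply/usedP => -[F [FD wF hF]].
rewrite (@kempe_at c D a b v F w hD FD wF) wc in hF.
by apply: (negP hn); apply/usedP; exists F; rewrite -hF swapcK.
Qed.

Lemma kempe_notin_out c D a b v w g :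
  (forall F, F \in D -> exists x y, F = [set x; y]) ->
  w \notin comp c D a b v -> g \notin used c D w -> g \notin used (kempe c D a b v) D w.
Proof.
move=> hD wc hn; apply/usedP => -[F [FD wF hF]].
rewrite (@kempe_at c D a b v F w hD FD wF) (negbTE wc) in hF.
by apply: (negP hn); apply/usedP; exists F.
Qed.

End Gen.

Definition nonisol (T : finType) (K : rel T) := [set a | [exists b, K a b]].

Lemma three_ends_n (T : finType) n : forall (K : rel T), #|nonisol K| <= n ->
  symmetric K ->
  (forall a b1 b2 b3, K a b1 -> K a b2 -> K a b3 -> [|| b1 == b2, b1 == b3 | b2 == b3]) ->
  forall x y z, x != y -> x != z -> y != z ->
  (forall b b', K x b -> K x b' -> b = b') ->
  (forall b b', K y b -> K y b' -> b = b') ->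
  (forall b b', K z b -> K z b' -> b = b') ->
  connect K x y -> connect K x z -> False.
Proof.
elim: n => [|n IH] K hn hs h3 x y z xy xz yz dx dy dz cxy cxz.
  case/connectP: cxy => [[|b p] /= pth hl]; first by rewrite -hl eqxx in xy.
  move: pth => /andP [xb _].
  have : x \in nonisol K by rewrite inE; apply/existsP; exists b.
  by move: hn; rewrite leqn0 => /eqP/cards0_eq ->; rewrite inE.
have [x' xx'] : exists x', K x x'.
  case/connectP: cxy => [[|b p] /= pth hl]; first by rewrite -hl eqxx in xy.
  by move: pth => /andP [xb _]; exists b.
pose K' : rel T := fun a b => [&& K a b, a != x & b != x].
have hs' : symmetric K'.
  by move=> a b; rewrite /K' hs [(b != x) && _]andbC.
have h3' : forall a b1 b2 b3, K' a b1 -> K' a b2 -> K' a b3 -> [|| b1 == b2, b1 == b3 | b2 == b3].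
  by move=> a b1 b2 b3 /and3P [k1 _ _] /and3P [k2 _ _] /and3P [k3 _ _]; apply: h3 k1 k2 k3.
have lift : forall w, w != x -> connect K x w -> connect K' x' w.
  move=> w wx /connectP [p pth hl]; subst w.
  move: wx; case: (shortenP pth) => p' pth' uq _ wx; clear pth.
  move: wx; case: p' pth' uq => [|b q] /=; first by rewrite eqxx.
  case/andP => xb pth; rewrite inE negb_or => /andP [/andP [xb' xq] _] wx.
  have bx' : b = x' by apply: dx.
  subst b; apply/connectP; exists q => //.
  apply: (@sub_in_path _ (predC1 x) K K') => //.
    move=> u v hu hv huv; rewrite /K' huv /=; apply/andP; split; [exact: hu | exact: hv].
  apply/allP => u; rewrite inE => /orP [/eqP ->|uq] /=; first by rewrite eq_sym.
  by apply: contraNneq xq => <-.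
have cyy : connect K' x' y by apply: lift => //; rewrite eq_sym.
have czz : connect K' x' z by apply: lift => //; rewrite eq_sym.
have nostep : forall u w, (forall b, ~~ K' u b) -> u != w -> ~~ connect K' u w.
  move=> u w hu uw; apply/negP => /connectP [[|b p] /= pth hl]; first by rewrite -hl eqxx in uw.
  by move: pth => /andP [ub _]; move: (hu b); rewrite ub.
case: (eqVneq x' y) => [x'y|x'y].
  subst x'.
  have noK'y : forall b, ~~ K' y b.
    move=> b; apply/negP => /and3P [yb _ bx].
    have yx : K y x by rewrite hs.
    by move: bx; rewrite (dy _ _ yb yx) eqxx.
  by move: czz; apply/negP; apply: nostep.
case: (eqVneq x' z) => [x'z|x'z].
  subst x'.
  have noK'z : forall b, ~~ K' z b.
    move=> b; apply/negP => /and3P [zb _ bx].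
    have zx : K z x by rewrite hs.
    by move: bx; rewrite (dz _ _ zb zx) eqxx.
  by move: cyy; apply/negP; apply: (nostep _ _ noK'z); rewrite eq_sym.
apply: (IH K' _ hs' h3' x' y z x'y x'z yz) => //.
- rewrite -ltnS; apply: leq_trans hn; apply: proper_card; apply/properP; split.
    apply/subsetP => u; rewrite !inE => /existsP [b /and3P [ub _ _]].
    by apply/existsP; exists b.
  exists x; first by rewrite inE; apply/existsP; exists x'.
  by rewrite inE; apply/existsP => -[b /and3P [_ ]]; rewrite eqxx.
- move=> b b' /and3P [x'b _ bx] /and3P [x'b' _ b'x].
  have x'x : K x' x by rewrite hs.
  move: (h3 _ _ _ _ x'x x'b x'b'); rewrite eq_sym (negbTE bx) eq_sym (negbTE b'x) /=.
  by move/eqP.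
- by move=> b b' /and3P [h _ _] /and3P [h' _ _]; apply: dy.
- by move=> b b' /and3P [h _ _] /and3P [h' _ _]; apply: dz.
Qed.


Lemma properD_sub (T : finType) c (D D' : {set {set T}}) : propD c D -> D' \subset D -> propD c D'.
Proof. by move=> hp /subsetP s E F hE hF; apply: hp; apply: s. Qed.

Lemma miss (U : {set 'I_4}) : #|U| < 4 -> exists g, g \notin U.
Proof.
move=> h; have : 0 < #|~: U| by have := cardsC U; rewrite card_ord; lia.
by case/card_gt0P => g; rewrite inE => hg; exists g.
Qed.

Lemma disj (A B : {set 'I_4}) g : (forall g, g \in A \/ g \in B) -> #|A| <= 2 -> #|B| <= 2 ->
  g \in A -> g \notin B.
Proof.
move=> hAB hA hB gA; apply/negP => gB.
have hU : A :|: B = setT by apply/setP => x; rewrite !inE; case: (hAB x) => ->; rewrite ?orbT.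
have := cardsUI A B; rewrite hU cardsT card_ord.
have : 0 < #|A :&: B| by apply/card_gt0P; exists g; rewrite inE gA gB.
lia.
Qed.

Lemma swapc_b a b : swapc a b b = a.
Proof. by rewrite /swapc; case: eqVneq => [->|]; rewrite ?eqxx. Qed.

Section Viz.
Variables (V : finType) (e : rel V).
Hypothesis hc : cubic e.

Lemma edge_neq a b : [set a; b] \in edge_set e -> a != b.
Proof.
move=> h; apply/negP => /eqP ab; subst b.
move: h; rewrite inE => /existsP [x /existsP [y /andP [/eqP h exy]]].
have hx : x \in [set a; a] by rewrite h !inE eqxx.
have hy : y \in [set a; a] by rewrite h !inE eqxx orbT.
move: hx hy; rewrite !inE !orbb => /eqP hx /eqP hy; subst.
by rewrite e_irr in exy.
Qed.

Lemma deg3 w : #|[set F in edge_set e | w \in F]| <= 3.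
Proof.
rewrite -(cardN hc w).
apply: leq_trans (leq_imset_card (fun u => [set w; u]) _).
apply: subset_leq_card; apply/subsetP => F; rewrite inE => /andP [FE wF].
have [t [-> ewt]] := edge_at (e_sym hc) FE wF.
by apply/imsetP; exists t; rewrite ?inE.
Qed.

Lemma used_card (c : {set V} -> 'I_4) (D : {set {set V}}) w : D \subset edge_set e -> #|used c D w| <= 3.
Proof.
move=> hD; apply: leq_trans (leq_imset_card _ _) _.
apply: leq_trans (deg3 w); apply: subset_leq_card; apply/subsetP => F.
rewrite !inE => /andP [FD ->]; rewrite andbT.
by move: (subsetP hD F FD); rewrite inE.
Qed.

Lemma used_card2 (c : {set V} -> 'I_4) (D : {set {set V}}) w E0 : D \subset edge_set e -> E0 \in edge_set e -> E0 \notin D -> w \in E0 ->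
  #|used c D w| <= 2.
Proof.
move=> hD hE0 nD wE0; apply: leq_trans (leq_imset_card _ _) _.
have : #|[set F in edge_set e | w \in F] :\ E0| <= 2.
  have := deg3 w; have := cardsD1 E0 [set F in edge_set e | w \in F].
  rewrite inE hE0 wE0 /=; lia.
apply: leq_trans; apply: subset_leq_card; apply/subsetP => F.
rewrite !inE => /andP [FD ->]; rewrite andbT.
move: (subsetP hD F FD); rewrite inE => ->; rewrite andbT.
by apply: contraTneq FD => ->.
Qed.

Section KrFacts.
Variables (c : {set V} -> 'I_4) (D : {set {set V}}) (al be : 'I_4).
Hypotheses (hD : D \subset edge_set e) (hp : propD c D).

Lemma Kr_sym : symmetric (Kr c D al be).
Proof. by move=> a b; rewrite /Kr setUC. Qed.

Lemma Kr_uniq a b b' : Kr c D al be a b -> Kr c D al be a b' ->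
  c [set a; b] = c [set a; b'] -> b = b'.
Proof.
move=> /andP [h1 _] /andP [h2 _] hcol; apply/eqP/negP => /negP bb.
have ab : a != b by apply: edge_neq; apply: (subsetP hD).
have : c [set a; b] != c [set a; b'].
  apply: hp => //.
    apply: (@sneq _ _ _ b); rewrite !inE ?eqxx ?orbT //.
    by rewrite negb_or eq_sym ab.
  by apply: (@meet _ _ _ a); rewrite !inE eqxx.
by rewrite hcol eqxx.
Qed.

Lemma Kr_col a b : Kr c D al be a b -> c [set a; b] \in used c D a.
Proof. by case/andP => h _; apply/usedP; exists [set a; b]; rewrite !inE eqxx. Qed.

Lemma Kr_deg1 a : (al \notin used c D a) || (be \notin used c D a) ->
  forall b b', Kr c D al be a b -> Kr c D al be a b' -> b = b'.
Proof.
move=> hm b b' hb hb'; apply: (Kr_uniq hb hb').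
have k1 := Kr_col hb; have k2 := Kr_col hb'.
move: hb hb' => /andP [_ c1] /andP [_ c2]; move: c1 c2 k1 k2 hm; rewrite !inE.
by case/orP => /eqP -> /orP [] /eqP -> // -> ->.
Qed.

Lemma Kr_three a b1 b2 b3 : Kr c D al be a b1 -> Kr c D al be a b2 -> Kr c D al be a b3 ->
  [|| b1 == b2, b1 == b3 | b2 == b3].
Proof.
move=> k1 k2 k3.
have u12 := Kr_uniq k1 k2; have u13 := Kr_uniq k1 k3; have u23 := Kr_uniq k2 k3.
move: k1 k2 k3 => /andP [_] /[dup] c1 + /andP [_] /[dup] c2 + /andP [_] /[dup] c3.
rewrite !inE => /orP [] /eqP e1 /orP [] /eqP e2 /orP [] /eqP e3.
all: first [ by rewrite u12 ?eqxx // e1 e2 | by rewrite u13 ?eqxx ?orbT // e1 e3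
           | by rewrite u23 ?eqxx ?orbT // e2 e3 ].
Qed.

End KrFacts.

Lemma two_of (D : {set {set V}}) : D \subset edge_set e ->
  forall F, F \in D -> exists x y, F = [set x; y].
Proof.
move=> hD F FD; move: (subsetP hD F FD); rewrite inE => /existsP [x /existsP [y /andP [/eqP h _]]].
by exists x, y.
Qed.

Lemma nboth (A B : {set 'I_4}) :
  ~~ [exists g, (g \notin A) && (g \notin B)] -> forall g, g \in A \/ g \in B.
Proof.
move=> h g; move: h; rewrite negb_exists => /forallP /(_ g).
by rewrite negb_and !negbK => /orP [] ->; auto.
Qed.

Lemma orl (b1 b2 : bool) : b1 \/ b2 -> ~~ b2 -> b1.
Proof. by case: b1; case: b2 => // [[]]. Qed.

Lemma extend (c : {set V} -> 'I_4) (D : {set {set V}}) x y :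
  D \subset edge_set e -> propD c D -> [set x; y] \notin D -> e x y ->
  exists c', propD c' ([set x; y] |: D).
Proof.
move=> hD hp E0D exy.
have hE0 : [set x; y] \in edge_set e by apply: edge2.
have hD2 := two_of hD.
have cx : #|used c D x| <= 2 by apply: (used_card2 _ hD hE0 E0D); rewrite !inE eqxx.
have cy : #|used c D y| <= 2 by apply: (used_card2 _ hD hE0 E0D); rewrite !inE eqxx orbT.
have c3 : forall w, #|used c D w| <= 3 by move=> w; apply: used_card.
have xy : x != y by apply: edge_neq.
have sD : forall F, F \in D -> D :\ F \subset D by move=> F _; apply: subD1set.
have recol : forall (c0 : {set V} -> 'I_4) F a b g, propD c0 D -> F \in D -> F = [set a; b] ->
    g \notin used c0 D a -> g \notin used c0 D b -> propD (upd c0 F g) D.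
  move=> c0 F a b g hp0 FD hF ga gb.
  rewrite -(setD1K FD); apply: (set_col _ hF); last 2 first.
  - exact: used_sub.
  - exact: used_sub.
  by apply: properD_sub hp0 _; apply: subD1set.
case: (boolP [exists g, (g \notin used c D x) && (g \notin used c D y)]) =>
    [/existsP [g /andP [gx gy]]|/nboth hxy].
  by exists (upd c [set x; y] g); apply: set_col.
have [be bey] := miss (leq_ltn_trans cy (isT : 2 < 4)).
have bex : be \in used c D x by apply: orl (hxy be) bey.
case/usedP: (bex) => F [FD xF cF].
have [z [hFz exz]] := edge_at (e_sym hc) (subsetP hD F FD) xF.
have zy : z != y by apply: contraNneq E0D => <-; rewrite -hFz.
have zx : z != x by apply/negP => /eqP h; move: exz; rewrite h e_irr.
have yF : y \notin F by rewrite hFz !inE negb_or (eq_sym y x) xy (eq_sym y z) zy.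
have bez : be \in used c D z by apply/usedP; exists F; split => //; rewrite hFz !inE eqxx orbT.
case: (boolP [exists g, (g \notin used c D x) && (g \notin used c D z)]) =>
    [/existsP [g /andP [gx gz]]|/nboth hxz].
  (* rotate once *)
  have gbe : be != g by apply: contraNneq gx => <-.
  pose c1 := upd c F g.
  have hp1 : propD c1 D by apply: (recol _ _ _ _ _ hp FD hFz).
  exists (upd c1 [set x; y] be); apply: set_col hp1 erefl _ _.
  - by apply: (used_upd_notin gbe); rewrite -cF; apply: used_minus.
  - by apply: (used_upd_notin gbe); apply: used_sub.
have [be' be'z] := miss (leq_ltn_trans (c3 z) (isT : 3 < 4)).
have be'x : be' \in used c D x by apply: orl (hxz be') be'z.
case/usedP: (be'x) => F' [F'D xF' cF'].
have [z' [hFz' exz']] := edge_at (e_sym hc) (subsetP hD F' F'D) xF'.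
have bebe' : be != be' by apply: contraNneq be'z => <-.
have FF' : F != F' by apply: contraNneq bebe' => h; rewrite -cF -cF' h.
have zz' : z != z' by apply: contraNneq FF' => h; rewrite hFz hFz' h.
have z'y : z' != y by apply: contraNneq E0D => <-; rewrite -hFz'.
have z'x : z' != x by apply/negP => /eqP h; move: exz'; rewrite h e_irr.
have yF' : y \notin F' by rewrite hFz' !inE negb_or (eq_sym y x) xy (eq_sym y z') z'y.
have zF' : z \notin F' by rewrite hFz' !inE negb_or zx zz'.
case: (boolP [exists g, (g \notin used c D x) && (g \notin used c D z')]) =>
    [/existsP [g /andP [gx gz']]|/nboth hxz'].
  (* rotate twice *)
  have gbe : be != g by apply: contraNneq gx => <-.
  have gbe' : be' != g by apply: contraNneq gx => <-.
  pose c1 := upd c F' g.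
  have hp1 : propD c1 D by apply: (recol _ _ _ _ _ hp F'D hFz').
  have c1F : c1 F = be by rewrite /c1 /upd (negbTE FF').
  pose c2 := upd c1 F be'.
  have hp2 : propD c2 D.
    apply: (recol _ _ _ _ _ hp1 FD hFz).
    - by apply: (used_upd_notin gbe'); rewrite -cF'; apply: used_minus.
    - by apply: (used_upd_notin gbe'); apply: used_sub.
  exists (upd c2 [set x; y] be); apply: set_col hp2 erefl _ _.
  - by apply: (used_upd_notin bebe'); rewrite -{1}c1F; apply: used_minus.
  - apply: (used_upd_notin bebe'); apply: used_sub.
    by apply: (used_upd_notin gbe); apply: used_sub.
(* Kempe chain *)
have [al alx] := miss (leq_ltn_trans cx (isT : 2 < 4)).
have be'y : be' \notin used c D y by apply: (disj hxy).
have albe' : al != be' by apply: contraNneq alx => ->.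
have albe : al != be by apply: contraNneq alx => ->.
pose K := Kr c D al be'.
have hs : symmetric K by apply: Kr_sym.
have h3 : forall a b1 b2 b3, K a b1 -> K a b2 -> K a b3 -> [|| b1 == b2, b1 == b3 | b2 == b3].
  by move=> a b1 b2 b3; apply: Kr_three.
have dx : forall b b', K x b -> K x b' -> b = b' by apply: Kr_deg1 => //; rewrite alx.
have dy : forall b b', K y b -> K y b' -> b = b' by apply: Kr_deg1 => //; rewrite be'y orbT.
have dz : forall b b', K z b -> K z b' -> b = b' by apply: Kr_deg1 => //; rewrite be'z orbT.
have xz : x != z by rewrite eq_sym.
have yz : y != z by rewrite eq_sym.
have three := @three_ends_n _ _ K (leqnn _) hs h3 x y z xy xz yz dx dy dz.
pose c1 := kempe c D al be' x.
have hp1 : propD c1 D by apply: kempe_proper.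
have xc : x \in comp c D al be' x by rewrite inE connect0.
have be'x1 : be' \notin used c1 D x.
  by apply: kempe_notin_in => //; rewrite swapc_b.
case: (boolP (connect K x y)) => cxy.
  have zc : z \notin comp c D al be' x by rewrite inE; apply/negP => cxz; apply: three.
  have be'z1 : be' \notin used c1 D z by apply: kempe_notin_out.
  have c1F : c1 F = be.
    have zF : z \in F by rewrite hFz !inE eqxx orbT.
    by rewrite /c1 (@kempe_at _ c D al be' x F z hD2 FD zF) (negbTE zc).
  pose c2 := upd c1 F be'.
  have hp2 : propD c2 D by apply: (recol _ _ _ _ _ hp1 FD hFz).
  exists (upd c2 [set x; y] be); apply: set_col hp2 erefl _ _.
  - by apply: (used_upd_notin bebe'); rewrite -{1}c1F; apply: used_minus.
  - apply: (used_upd_notin bebe'); apply: used_sub.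
    case: (boolP (y \in comp c D al be' x)) => yc.
      by apply: kempe_notin_in => //; rewrite swapc_out // eq_sym.
    exact: (@kempe_notin_out _ c D al be' x y be hD2 yc bey).
have yc : y \notin comp c D al be' x by rewrite inE.
exists (upd c1 [set x; y] be'); apply: set_col hp1 erefl be'x1 _.
by apply: kempe_notin_out.
Qed.

Lemma vizing_D : forall D : {set {set V}}, D \subset edge_set e ->
  exists c : {set V} -> 'I_4, propD c D.
Proof.
move=> D; move: {2}#|D| (leqnn #|D|) => n; elim: n D => [|n IH] D hn hD.
  exists (fun _ => ord0) => E F ED.
  by move: hn; rewrite leqn0 => /eqP /cards0_eq h; rewrite h inE in ED.
case: (set_0Vmem D) => [->|[E0 E0D]]; first by exists (fun _ => ord0) => E F; rewrite inE.
have hD' : D :\ E0 \subset edge_set e by apply: subset_trans hD; apply: subD1set.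
have hn' : #|D :\ E0| <= n by move: hn; rewrite (cardsD1 E0 D) E0D add1n.
have [c hp] := IH (D :\ E0) hn' hD'.
move: (subsetP hD _ E0D); rewrite inE => /existsP [x /existsP [y /andP [/eqP hE0 exy]]].
have nD : [set x; y] \notin D :\ E0 by rewrite -hE0 !inE eqxx.
have [c' hc'] := extend hD' hp nD exy.
by exists c'; rewrite -hE0 setD1K in hc'.
Qed.

Lemma vizing : exists c : {set V} -> 'I_4, proper_edge_colouring e c.
Proof. by have [c hp] := vizing_D (subxx (edge_set e)); exists c. Qed.

End Viz.

Lemma chi_eq (V : finType) (e : rel V) : cubic e ->
  chromatic_index (tri_rel e) = chromatic_index e.
Proof.
move=> hc; rewrite /chromatic_index.
case: (ex_minnP (chi'_exists (tri_rel e))) => kG /asboolP [cG hG] minG.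
case: (ex_minnP (chi'_exists e)) => kH /asboolP [cH hH] minH.
apply/eqP; rewrite eqn_leq; apply/andP; split.
  apply: minG; apply/asboolP; exists (fun EG => cH (hE EG)); exact: col_up.
case: (leqP kG 3) => h.
  apply: minH; apply/asboolP; exists (fun E => cG (pend e E)); exact: col_down.
apply: leq_trans h; apply: minH; apply/asboolP; exact: vizing.
Qed.

Unset Implicit Arguments.
Local Open Scope ring_scope.

Theorem proposition5p11 (V : finType) (e : rel V) :
  cubic e ->
  let G := tri_rel e in
  let m := #|V| in
  (((c2 G)%:Z - ((#|{: tri_vert e}| + 2 + 3) %/ 4)%N%:Z) >= ((m%:Z - 2) %/ 4)%Z)
  /\ num_bridges G = num_bridges e
  /\ chromatic_index G = chromatic_index e.
Proof.
move=> hc G m; split; last split.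
- rewrite /G /m card_tri //.
  have := c2_ge hc; move: (c2 (tri_rel e)) (#|V|) => a b h.
  lia.
- exact: num_bridges_eq.
- exact: chi_eq.
Qed.
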